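(* For every $n$, there are finite alphabets $\Sigma_I,\Sigma_O$ and a finitary parity automaton $\mathcal{A}_n$ over $\Sigma_I\times\Sigma_O$ with $O(n)$ states such that, for every delay function $f$, Player $O$ wins $\Gamma_f(L(\mathcal{A}_n))$ if, and only if, $f(0)\ge 2^n+1$. Furthermore, for every such $f$ (i.e., with $f(0)\ge 2^n+1$), the cost of an optimal winning strategy for Player $O$ in $\Gamma_f(L(\mathcal{A}_n))$ is $2^n+1$.
   Context: A parity automaton with costs is a tuple $\mathcal{A}=(Q,\Sigma,q_I,\delta,\Omega,\mathrm{Cst})$ with a finite set $Q$ of states, a finite alphabet $\Sigma$, an initial state $q_I$, a deterministic complete transition function $\delta\colon Q\times\Sigma\to Q$, a coloring $\Omega\colon Q\to\mathbb{N}$ (with $\Omega(Q)$ containing both an even and an odd color), and a cost function $\mathrm{Cst}$ assigning to every transition $(q,a,\delta(q,a))$ either $\epsilon$ or $\mathtt{i}$ (increment-transition). It is a finitary parity automaton if every transition is an increment-transition. The run on $a_0a_1\cdots$ is $(q_0,a_0,q_1)(q_1,a_1,q_2)\cdots$ with $q_0=q_I$, $q_{j+1}=\delta(q_j,a_j)$; the cost of a finite run is its number of increment-transitions. For odd $c$, $\mathrm{Ans}(c)=\{c'\in\Omega(Q)\mid c'>c,\ c'\text{ even}\}$. For an infinite run $\rho$ and $n$, $\mathrm{Cor}(\rho,n)=0$ if $\Omega(q_n)$ is even, and otherwise it is the minimal cost of $(q_n,a_n,q_{n+1})\cdots(q_{n'-1},a_{n'-1},q_{n'})$ over $n'>n$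 with $\Omega(q_{n'})\in\mathrm{Ans}(\Omega(q_n))$ ($\min\emptyset=\infty$). The run is accepting if $\limsup_n\mathrm{Cor}(\rho,n)<\infty$; $L(\mathcal{A})$ is the set of infinite words whose run is accepting. A delay function is a map $f\colon\mathbb{N}\to\mathbb{N}\setminus\{0\}$. For $L\subseteq(\Sigma_I\times\Sigma_O)^\omega$, the delay game $\Gamma_f(L)$ is played in rounds $i=0,1,2,\ldots$: in round $i$, Player $I$ picks $u_i\in\Sigma_I^{f(i)}$, then Player $O$ picks $v_i\in\Sigma_O$. Player $O$ wins the play if the outcome, i.e., the word over $\Sigma_I\times\Sigma_O$ pairing $\alpha=u_0u_1u_2\cdots$ and $\beta=v_0v_1v_2\cdots$ letterwise, is in $L$; otherwise Player $I$ wins. A strategy for Player $I$ is a map $\tau_I\colon\Sigma_O^*\to\Sigma_I^*$ with $|\tau_I(w)|=f(|w|)$; a strategy for Player $O$ is a map $\tau_O\colon\Sigma_I^*\to\Sigma_O$. A play is consistent with $\tau_I$ if $u_i=\tau_I(v_0\cdots v_{i-1})$ for all $i$, and with $\tau_O$ if $v_i=\tau_O(u_0\cdots u_i)$ for all $i$. A strategy is winning if every consistent play is won by its owner; a player wins the game if she has a winning strategy. For a winning strategy $\tau_O$ of Player $O$ in $\Gamma_f(L(\mathcal{A}))$, its cost is $\mathrm{Cst}_\mathcal{A}(\tau_O)=\sup_w\limsup_{n\to\infty}\mathrm{Cor}(\rho(w),n)$, where $w$ ranges over outcomes of plays consistent with $\tau_O$ and $\rho(w)$ is the run of $\mathcal{A}$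 on $w$; a winning strategy is optimal if it has minimal cost among all winning strategies of Player $O$ in $\Gamma_f(L(\mathcal{A}))$. *)

(* Defs.v *)
From mathcomp Require Import all_boot.
Set Implicit Arguments. Unset Strict Implicit. Unset Printing Implicit Defensive.

(* Parity automaton with costs over alphabet Sigma.
   [pca_cst q a = true] means the transition (q,a,delta q a) is an
   increment-transition, [false] means it is an epsilon-transition. *)
Record pca (Sigma : finType) := PCA {
  pca_st : finType;
  pca_init : pca_st;
  pca_delta : pca_st -> Sigma -> pca_st;
  pca_col : pca_st -> nat;
  pca_cst : pca_st -> Sigma -> bool;
  pca_has_even : exists q, ~~ odd (pca_col q);
  pca_has_odd : exists q, odd (pca_col q)
}.
Arguments pca_st {Sigma} p.
Arguments pca_init {Sigma} p.
Arguments pca_delta {Sigma} p _ _.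
Arguments pca_col {Sigma} p _.
Arguments pca_cst {Sigma} p _ _.

Section Auto.
Variables (Sigma : finType) (A : pca Sigma).

Definition finitary : Prop := forall q a, pca_cst A q a = true.

Fixpoint run (w : nat -> Sigma) (j : nat) : pca_st A :=
  match j with
  | 0 => pca_init A
  | j'.+1 => pca_delta A (run w j') (w j')
  end.

Definition seg_cost (w : nat -> Sigma) (n n' : nat) : nat :=
  \sum_(n <= j < n') (pca_cst A (run w j) (w j) : nat).

Definition answers (c c' : nat) : bool := odd c && ~~ odd c' && (c < c').

(* Cor_le w n k  <->  Cor(rho(w), n) <= k  (Cor is a min over answers,
   with min of the empty set = infinity, and 0 when the color is even). *)
Definition Cor_le (w : nat -> Sigma) (n k : nat) : Prop :=
  ~~ odd (pca_col A (run w n)) \/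
  exists n', n < n' /\ answers (pca_col A (run w n)) (pca_col A (run w n'))
             /\ seg_cost w n n' <= k.

Definition limsup_Cor_le (w : nat -> Sigma) (k : nat) : Prop :=
  exists N, forall n, N <= n -> Cor_le w n k.

(* w in L(A) iff limsup_n Cor(rho(w),n) < oo *)
Definition accepts (w : nat -> Sigma) : Prop := exists k, limsup_Cor_le w k.

End Auto.

Definition delay_fun (f : nat -> nat) : Prop := forall i, 0 < f i.

Section Game.
Variables (SI SO : finType) (f : nat -> nat).

Definition strategyO := seq SI -> SO.

Definition blk_end (i : nat) : nat := \sum_(j < i.+1) f j.

(* Outcome of the play in which Player I's letters form alpha = u_0 u_1 ...
   (with |u_i| = f i) and Player O plays v_i = tau (u_0 ... u_i). *)
Definition outcome (tau : strategyO) (alpha : nat -> SI) : nat -> (SI * SO)%type :=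
  fun i => (alpha i, tau (mkseq alpha (blk_end i))).

Definition winningO (L : (nat -> (SI * SO)%type) -> Prop) (tau : strategyO) : Prop :=
  forall alpha, L (outcome tau alpha).

Definition O_wins (L : (nat -> (SI * SO)%type) -> Prop) : Prop :=
  exists tau, winningO L tau.

Definition strat_cost_le (A : pca (SI * SO)%type) (tau : strategyO) (k : nat) : Prop :=
  forall alpha, limsup_Cor_le A (outcome tau alpha) k.

Definition optimal_cost (A : pca (SI * SO)%type) (k : nat) : Prop :=
  (exists tau, winningO (accepts A) tau /\ strat_cost_le A tau k /\
               forall j, strat_cost_le A tau j -> k <= j) /\
  (forall tau j, winningO (accepts A) tau -> strat_cost_le A tau j -> k <= j).

End Game.

(* Main.v *)
Require Import Defs.
From mathcomp Require Import all_boot.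
From mathcomp Require Import zify.
Set Implicit Arguments. Unset Strict Implicit. Unset Printing Implicit Defensive.

Section Tracker.
Variable n : nat.

Definition tk (j : nat) (b : bool) (a : nat) : option bool :=
  if a == j then (if b || (n <= j) then None else Some true)
  else if j < a then Some false else Some b.

Fixpoint tkseq (j : nat) (b : bool) (s : seq nat) : option bool :=
  match s with
  | [::] => Some b
  | a :: s' => match tk j b a with None => None | Some b' => tkseq j b' s' end
  end.

Lemma tkseq_cat j b s1 s2 :
  tkseq j b (s1 ++ s2) = obind (fun b' => tkseq j b' s2) (tkseq j b s1).
Proof.
elim: s1 b => [|a s1 IH] b //=. by case: (tk j b a).
Qed.

Lemma tkseq_rcons j b s a :
  tkseq j b (rcons s a) = obind (fun b' => tk j b' a) (tkseq j b s).
Proof.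
rewrite -cats1 tkseq_cat. case: (tkseq j b s) => //= b'. by case: (tk j b' a).
Qed.

Lemma tkseq_prefix j b s1 s2 : tkseq j b s1 = None -> tkseq j b (s1 ++ s2) = None.
Proof. by rewrite tkseq_cat => ->. Qed.

Lemma tkseq_small j b s : all (fun a => a < j) s -> tkseq j b s = Some b.
Proof.
elim: s => [|a s IH] //= /andP [ha hs].
rewrite /tk. have -> : (a == j) = false by apply/eqP; lia.
have -> : (j < a) = false by lia.
exact: IH.
Qed.

Lemma tk_neq j b a : a != j -> exists b', tk j b a = Some b'.
Proof. rewrite /tk => /negbTE ->. by case: (j < a); eexists. Qed.

Lemma tkseq_nseq j b m a : a != j -> exists b', tkseq j b (nseq m a) = Some b'.
Proof.
move=> ha; elim: m b => [|m IH] b /=; first by eexists.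
have [b' ->] := tk_neq b ha. exact: IH.
Qed.

Fixpoint ruler (m : nat) : seq nat :=
  match m with 0 => [::] | m'.+1 => ruler m' ++ m' :: ruler m' end.

Lemma ruler_small m : all (fun a => a < m) (ruler m).
Proof.
elim: m => [|m IH] //=. rewrite all_cat /= ltnSn /=.
have H : all (fun a => a < m.+1) (ruler m).
  apply/allP => x hx. have := allP IH x hx. lia.
by rewrite H.
Qed.

Lemma size_ruler m : size (ruler m) = (2 ^ m).-1.
Proof.
elim: m => [|m IH] //=. rewrite size_cat /= IH expnS.
have := expn_gt0 2 m. lia.
Qed.

Lemma ruler_tk m j : m <= n -> j < m -> tkseq j false (ruler m) = Some true.
Proof.
elim: m j => [|m IH] j // hm hj /=.
rewrite tkseq_cat.
case: (ltnP j m) => hjm.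
  rewrite IH //; last lia. rewrite /= /tk.
  have -> : (m == j) = false by apply/eqP; lia.
  rewrite hjm /=. apply: IH => //. lia.
have ej : j = m by lia. subst j.
rewrite tkseq_small ?ruler_small //= /tk eqxx /=.
have -> : (n <= m) = false by lia.
by rewrite tkseq_small ?ruler_small.
Qed.

Lemma ruler_some j : exists b, tkseq j false (ruler n) = Some b.
Proof.
case: (ltnP j n) => h; first by exists true; apply: ruler_tk.
exists false; apply: tkseq_small. apply/allP => x hx.
have := allP (ruler_small n) x hx. lia.
Qed.

Lemma ruler_prefix_some j k : exists b, tkseq j false (take k (ruler n)) = Some b.
Proof.
have [b hb] := ruler_some j.
case e: (tkseq j false (take k (ruler n))) => [b'|]; first by exists b'.
by rewrite -(cat_take_drop k (ruler n)) tkseq_prefix in hb.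
Qed.

Lemma sum_bits_lt m (x : nat -> bool) : \sum_(0 <= i < m) x i * 2 ^ i < 2 ^ m.
Proof.
elim: m => [|m IH]; first by rewrite big_geq.
rewrite big_nat_recr //= expnS. case: (x m) => /=; lia.
Qed.

Lemma sum_bits_inc m a (x y : nat -> bool) : a < m -> x a = false -> y a = true ->
  (forall j, a < j -> j < m -> x j = y j) ->
  \sum_(0 <= i < m) x i * 2 ^ i < \sum_(0 <= i < m) y i * 2 ^ i.
Proof.
elim: m => [|m IH] // ham hx hy hxy.
rewrite !big_nat_recr //=.
case: (ltnP a m) => h.
  rewrite hxy //.
  have H1 : forall j, a < j -> j < m -> x j = y j by move=> j h1 h2; apply: hxy; lia.
  have := IH h hx hy H1. lia.
have e : a = m by lia. subst a. rewrite hx hy /=.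
have := sum_bits_lt m x. lia.
Qed.

Lemma exists_answer (g : nat -> nat) :
  (forall i, g i < n.+2) ->
  exists j, j < n.+2 /\ tkseq j false (mkseq g (2 ^ n)) = None.
Proof.
move=> hg.
case: (boolP [exists j : 'I_n.+2, tkseq j false (mkseq g (2 ^ n)) == None]).
  by move/existsP => [j /eqP hj]; exists j.
move/existsPn => hall. exfalso.
pose st j k := tkseq j false (mkseq g k).
have stS : forall j k, st j k.+1 = obind (fun b => tk j b (g k)) (st j k).
  by move=> j k; rewrite /st mkseqS tkseq_rcons.
have nn : forall j k, j < n.+2 -> k <= 2 ^ n -> st j k <> None.
  move=> j k hj hk hN.
  have : forall d, st j (k + d) = None.
    elim=> [|d IH]; first by rewrite addn0.
    by rewrite addnS stS IH.
  move/(_ (2 ^ n - k)). have -> : k + (2 ^ n - k) = 2 ^ n by lia.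
  move=> h. have := hall (Ordinal hj). by rewrite /= -/(st j (2 ^ n)) h.
pose Phi k := \sum_(0 <= i < n) (st i k == Some true) * 2 ^ i.
have key : forall k, k <= 2 ^ n -> k <= Phi k.
  elim=> [|k IH] hk; first by [].
  have {IH} IH := IH (ltnW hk).
  set a := g k.
  have ha : a < n.+2 by apply: hg.
  case ea: (st a k) => [ba|]; last by have := nn a k ha (ltnW hk); rewrite ea.
  have han : a < n.
    case: (ltnP a n) => // h.
    have := nn a k.+1 ha hk. by rewrite stS ea /= /tk eqxx h orbT.
  have hba : ba = false.
    case: ba ea => // ea.
    have := nn a k.+1 ha hk. by rewrite stS ea /= /tk eqxx.
  subst ba.
  suff : Phi k < Phi k.+1 by lia.
  apply: (@sum_bits_inc n a) => //.
  - by rewrite ea.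
  - by rewrite stS ea /= /tk eqxx /=; have -> : (n <= a) = false by lia.
  - move=> j h1 h2. rewrite stS.
    case ej: (st j k) => [bj|]; last by have := nn j k (ltn_trans h2 (ltnW (ltnSn _))) (ltnW hk); rewrite ej.
    rewrite /= /tk. have -> : (a == j) = false by apply/eqP; lia.
    by have -> : (j < a) = false by lia.
have := key _ (leqnn _). have := sum_bits_lt n (fun i => st i (2 ^ n) == Some true).
rewrite /Phi. lia.
Qed.
End Tracker.

Section Auto.
Variable n : nat.
Notation SI := (bool * 'I_n.+2)%type.
Notation SO := 'I_n.+2.
Notation ST := (('I_n.+2 * bool) + option bool)%type.
Definition sI0 : ST := inr None.
Definition sW : ST := inr (Some true).
Definition sD : ST := inr (Some false).

Definition dlt (s : ST) (x : SI * SO) : ST :=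
  let: ((fl, a), o) := x in
  match s with
  | inl (j, b) => match tk n j b a with None => sD | Some b' => inl (j, b') end
  | inr None => inl (o, false)
  | inr (Some true) => if fl then inl (o, false) else sW
  | inr (Some false) => sW
  end.

Definition col (s : ST) : nat :=
  match s with inl _ => 1 | inr (Some false) => 1 | _ => 2 end.

Lemma has_even : exists q, ~~ odd (col q).
Proof. by exists sW. Qed.
Lemma has_odd : exists q, odd (col q).
Proof. by exists sD. Qed.

Definition Aut : pca (SI * SO)%type :=
  @PCA _ ST sI0 dlt col (fun _ _ => true) has_even has_odd.

Lemma runS w t : run Aut w t.+1 = dlt (run Aut w t) (w t).
Proof. by []. Qed.

Lemma run_not_I0 w t : run Aut w t.+1 != sI0.
Proof.
rewrite runS /dlt. case: (w t) => [[fl a] o].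
case: (run Aut w t) => [[j b]|[[]|]] //=; first by case: (tk n j b a).
by case: fl.
Qed.

Lemma even_col s : ~~ odd (col s) -> s = sW \/ s = sI0.
Proof. by case: s => [[j b]|[[]|]] //= _; auto. Qed.

Lemma seg_costE w a b : a <= b -> seg_cost Aut w a b = b - a.
Proof.
move=> h. rewrite /seg_cost. under eq_bigr do rewrite /=.
by rewrite sum_nat_const_nat muln1.
Qed.

Definition tkrun (w : nat -> SI * SO) j b p k :=
  tkseq n j b (mkseq (fun m => val (w (p + m)).1.2) k).

Lemma tkrunS w j b p k :
  tkrun w j b p k.+1 = obind (fun b' => tk n j b' (w (p + k)).1.2) (tkrun w j b p k).
Proof. by rewrite /tkrun mkseqS tkseq_rcons. Qed.

Lemma corr w t (j : 'I_n.+2) b k b' : run Aut w t = inl (j, b) ->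
  tkrun w j b t k = Some b' -> run Aut w (t + k) = inl (j, b').
Proof.
move=> ht. elim: k b' => [|k IH] b'; first by rewrite addn0 /tkrun /= => [[<-]].
rewrite tkrunS addnS runS.
case e: (tkrun w j b t k) => [b''|] //= hb.
rewrite (IH _ e) /dlt. move: hb. case: (w (t + k)) => [[fl a] o] /= ->. by [].
Qed.

Lemma corrD w t (j : 'I_n.+2) b k b' : run Aut w t = inl (j, b) ->
  tkrun w j b t k = Some b' -> tk n j b' (w (t + k)).1.2 = None ->
  run Aut w (t + k).+1 = sD.
Proof.
move=> ht hk hn. rewrite runS (corr ht hk) /dlt. move: hn.
case: (w (t + k)) => [[fl a] o] /= ->. by [].
Qed.

Lemma tkrun_none w j b p k : tkrun w j b p k = None ->
  exists d b', d < k /\ tkrun w j b p d = Some b' /\ tk n j b' (w (p + d)).1.2 = None.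
Proof.
elim: k => [|k IH] //. rewrite tkrunS.
case e: (tkrun w j b p k) => [b'|] /= h.
  by exists k, b'.
have [d [b'' [h1 h2]]] := IH e. exists d, b''. split => //. lia.
Qed.

End Auto.

Lemma eq_in_mkseq' T (g h : nat -> T) k : (forall i, i < k -> g i = h i) -> mkseq g k = mkseq h k.
Proof. move=> H; apply/eq_in_map => i; rewrite mem_iota => /andP [_ hi]; apply: H; lia. Qed.

Lemma mkseq_nth_ext (T : Type) (c : T) s k :
  mkseq (nth c s) k = take k s ++ nseq (k - size s) c.
Proof.
apply: (@eq_from_nth _ c).
  rewrite size_mkseq. rewrite size_cat. rewrite size_take. rewrite size_nseq. case: ifP; lia.
move=> i; rewrite size_mkseq => hi. rewrite nth_mkseq // nth_cat size_take.
case: (ltnP k (size s)) => hk.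
  by rewrite hi nth_take.
case: (ltnP i (size s)) => his.
  by rewrite nth_take.
rewrite nth_nseq nth_default //. by case: ifP.
Qed.

Lemma blk_end0 f : blk_end f 0 = f 0.
Proof. by rewrite /blk_end big_ord1. Qed.

Section Lose.
Variable n : nat.

Definition alph (c i : nat) : (bool * 'I_n.+2)%type :=
  (false, inord (if i == 0 then 0 else nth c (ruler n) i.-1)).

Lemma not_acc_inl (w : nat -> ((bool * 'I_n.+2)%type * 'I_n.+2)%type) :
  (forall k, exists j b, run (Aut n) w k.+1 = inl (j, b)) -> ~ accepts (Aut n) w.
Proof.
move=> H [k [N HN]]. have [j [b hb]] := H N.
case: (HN N.+1 (leqnSn _)) => [|[n' [h1 [h2 _]]]]; first by rewrite hb.
move: h2; rewrite /answers. have [j' [b' hb']] := H n'.-1.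
by rewrite (ltn_predK h1) in hb'; rewrite hb' /= andbF.
Qed.

Lemma lose f tau : f 0 <= 2 ^ n -> ~ winningO f (accepts (Aut n)) tau.
Proof.
move=> hf0 hw.
pose j0 := tau (mkseq (alph n) (f 0)).
pose cj := if val j0 == n then n.+1 else n.
pose al := alph cj.
have hpre : mkseq al (blk_end f 0) = mkseq (alph n) (f 0).
  rewrite blk_end0; apply: eq_in_mkseq' => i hi. rewrite /al /alph.
  case: (i =P 0) => // /eqP hi0. congr (_, inord _).
  apply: set_nth_default. rewrite size_ruler. lia.
apply: (@not_acc_inl (outcome f tau al)); last exact: hw.
have r1 : run (Aut n) (outcome f tau al) 1 = inl (j0, false).
  by rewrite runS /= /outcome hpre.
move=> k. exists j0.
have hlet : forall m, val (outcome f tau al (1 + m)).1.2 = nth cj (ruler n) m.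
  move=> m. rewrite /outcome /al /alph /= ?add0n inordK //.
  case: (ltnP m (size (ruler n))) => hm.
    have /= := allP (ruler_small n) _ (mem_nth cj hm). lia.
  rewrite nth_default //. rewrite /cj; case: ifP => _; lia.
have [b hb] : exists b, tkrun (outcome f tau al) j0 false 1 k = Some b.
  rewrite /tkrun (eq_mkseq (hlet)) mkseq_nth_ext tkseq_cat.
  have [b1 ->] := ruler_prefix_some n j0 k. rewrite /=.
  apply: tkseq_nseq. rewrite /cj -[val j0]/(nat_of_ord j0). case: ifP => /eqP h; apply/eqP; lia.
exists b. by have := corr r1 hb; rewrite add1n.
Qed.
End Lose.

Section LB.
Variable n : nat.
Notation P := (2 ^ n).+1.

Definition alphB (i : nat) : (bool * 'I_n.+2)%type :=
  (i %% P == 0, inord (nth 0 (ruler n) (i %% P).-1)).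

Lemma inl_not_W (w : nat -> (bool * 'I_n.+2 * 'I_n.+2)%type) t j b :
  run (Aut n) w t = inl (j, b) -> run (Aut n) w t.+1 <> sW n.
Proof.
move=> h. rewrite runS h /dlt. case: (w t) => [[fl a] o].
by case: (tk n j b a).
Qed.

Lemma lb f tau k : winningO f (accepts (Aut n)) tau -> strat_cost_le f (Aut n) tau k ->
  2 ^ n + 1 <= k.
Proof.
move=> hw hc.
set w := outcome f tau alphB.
have [k' [N' HN']] := hw alphB.
have [N HN] := hc alphB.
rewrite -/w in HN' HN.
set t0 := maxn N N'.
have [t' [ht' rt']] : exists t', t0 <= t' /\ run (Aut n) w t' = sW n.
  case: (HN' t0.+1 _) => [|h|[n' [h1 [h2 _]]]]; first lia.
    exists t0.+1; split => //. have [//|h0] := even_col h.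
    by move: (run_not_I0 w t0); rewrite h0 eqxx.
  move: h2; rewrite /answers => /andP [/andP [_ h2] _].
  exists n'; split; first lia.
  have [//|h0] := even_col h2.
  have e : n' = n'.-1.+1 by lia.
  by move: (run_not_I0 w n'.-1); rewrite -e h0 eqxx.
have flag : forall d t, run (Aut n) w t = sW n -> (t + d) %% P = 0 ->
    exists p, t <= p /\ p %% P = 0 /\ run (Aut n) w p = sW n.
  elim=> [|d IH] t ht hm; first by exists t; rewrite addn0 in hm.
  case e: (t %% P == 0); first by exists t; split => //; split => //; apply/eqP.
  have [p [h1 h2]] : exists p, t.+1 <= p /\ p %% P = 0 /\ run (Aut n) w p = sW n.
    apply: IH; last by rewrite addSnnS.
    by rewrite runS ht /w /outcome /alphB /= e.
  exists p; split => //; lia.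
have [p [hp [hpm rp]]] : exists p, t' <= p /\ p %% P = 0 /\ run (Aut n) w p = sW n.
  apply: (flag (t' * (P.-1))) => //.
  have -> : t' + t' * P.-1 = t' * P by rewrite -{1}(muln1 t') -mulnDr.
  by rewrite modnMl.
set j := tau (mkseq alphB (blk_end f p)).
have r1 : run (Aut n) w p.+1 = inl (j, false).
  by rewrite runS rp /w /outcome /alphB /= hpm.
have hD : forall m, m <= (2 ^ n).-1 -> exists b, run (Aut n) w (p.+1 + m) = inl (j, b).
  move=> m hm.
  have [b hb] : exists b, tkrun w j false p.+1 m = Some b.
    rewrite /tkrun.
    have -> : mkseq (fun m0 => val (w (p.+1 + m0)).1.2) m = take m (ruler n).
      rewrite -(cats0 (take m _)).
      have <- : nseq (m - size (ruler n)) 0 = [::].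
        by rewrite size_ruler; have -> : m - (2 ^ n).-1 = 0 by lia.
      rewrite -mkseq_nth_ext. apply: eq_in_mkseq' => i hi.
      rewrite /w /outcome /alphB /=.
      have -> : (p.+1 + i) %% P = i.+1.
        rewrite addSn -addnS -modnDml hpm add0n modn_small //. lia.
      rewrite /= inordK //.
      have hi' : i < size (ruler n) by rewrite size_ruler; lia.
      have /= := allP (ruler_small n) _ (mem_nth 0 hi'). lia.
    exact: ruler_prefix_some.
  exists b. exact: corr r1 hb.
have hE : forall m, p.+1 <= m <= p + (2 ^ n).+1 -> run (Aut n) w m <> sW n.
  move=> m /andP [h1 h2].
  case: (ltnP m (p + (2 ^ n).+1)) => h3.
    have [b hb] := hD (m - p.+1) ltac:(lia).
    have e : p.+1 + (m - p.+1) = m by lia.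
    by rewrite e in hb; rewrite hb.
  have [b hb] := hD (2 ^ n).-1 (leqnn _).
  have e : m = (p.+1 + (2 ^ n).-1).+1 by have := expn_gt0 2 n; lia.
  rewrite e. exact: inl_not_W hb.
case: (HN p.+1 _) => [|h|[n' [h1 [h2 h3]]]]; first lia.
  by move: h; rewrite r1.
move: h2; rewrite /answers => /andP [/andP [_ h2] _].
have [h0|h0] := even_col h2; last first.
  have e : n' = n'.-1.+1 by lia.
  by move: (run_not_I0 w n'.-1); rewrite -e h0 eqxx.
have hn' : p + (2 ^ n).+1 < n'.
  case: (ltnP (p + (2 ^ n).+1) n') => // h.
  by have := hE n' ltac:(lia).
move: h3; rewrite seg_costE; lia.
Qed.
End LB.

Section UB.
Variable n : nat.
Variable f : nat -> nat.
Hypothesis hf : delay_fun f.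
Hypothesis hf0 : 2 ^ n + 1 <= f 0.

Lemma blkS i : blk_end f i.+1 = blk_end f i + f i.+1.
Proof. by rewrite /blk_end big_ord_recr. Qed.

Lemma blk_ge i : f 0 + i <= blk_end f i.
Proof.
elim: i => [|i IH]; first by rewrite blk_end0 addn0.
rewrite blkS. have := hf i.+1. lia.
Qed.

Lemma blk_lt i i' : i < i' -> blk_end f i < blk_end f i'.
Proof.
elim: i' => [|i' IH] // h. rewrite blkS. have := hf i'.+1.
case: (ltnP i i') => h'; first by have := IH h'; lia.
have -> : i = i' by lia. lia.
Qed.

Definition pos (L : nat) := find (fun i => blk_end f i == L) (iota 0 L).

Lemma posE t : pos (blk_end f t) = t.
Proof.
rewrite /pos. set L := blk_end f t.
have htL : t < L by have := blk_ge t; rewrite /L; lia.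
have hh : has (fun i => blk_end f i == L) (iota 0 L).
  apply/hasP; exists t => //; by rewrite mem_iota.
have hlt : find (fun i => blk_end f i == L) (iota 0 L) < L.
  by move: hh; rewrite has_find size_iota.
have := nth_find 0 hh. rewrite nth_iota // add0n => /eqP h.
case: (ltngtP (find (fun i => blk_end f i == L) (iota 0 L)) t) => // h'.
  by have := blk_lt h'; rewrite h /L; lia.
by have := blk_lt h'; rewrite h /L; lia.
Qed.

Definition win (g : nat -> (bool * 'I_n.+2)%type) (i : nat) :=
  mkseq (fun m => val (g (i.+1 + m)).2) (2 ^ n).

Definition best (g : nat -> (bool * 'I_n.+2)%type) (i : nat) : 'I_n.+2 :=
  odflt ord0 [pick j : 'I_n.+2 | tkseq n j false (win g i) == None].

Lemma best_spec g i : tkseq n (best g i) false (win g i) = None.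
Proof.
rewrite /best. case: pickP => [j /eqP //|H] /=.
have [j [hj hN]] := exists_answer (g := fun m => val (g (i.+1 + m)).2) (fun _ => ltn_ord _).
by have := H (Ordinal hj); rewrite /= /win hN eqxx.
Qed.

Definition tauO (s : seq (bool * 'I_n.+2)%type) : 'I_n.+2 :=
  best (fun k => nth (false, ord0) s k) (pos (size s)).

Lemma tauOE (al : nat -> (bool * 'I_n.+2)%type) t :
  tauO (mkseq al (blk_end f t)) = best al t.
Proof.
rewrite /tauO size_mkseq posE /best. congr odflt. apply: eq_pick => j /=.
congr (_ == None). congr tkseq. rewrite /win. apply: eq_in_mkseq' => i hi.
rewrite nth_mkseq //. have := blk_ge t. lia.
Qed.

Lemma ub al : limsup_Cor_le (Aut n) (outcome f tauO al) (2 ^ n + 1).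
Proof.
set w := outcome f tauO al.
have start : forall t j b, run (Aut n) w t.+1 = inl (j, b) ->
   (run (Aut n) w t = sW n \/ run (Aut n) w t = sI0 n) -> j = best al t /\ b = false.
  move=> t j b. rewrite runS /w /outcome /dlt /= tauOE.
  case: (al t) => fl a H [] E; rewrite E /= in H.
    by case: fl H => // [[<- <-]].
  by case: H => <- <-.
have J : forall t j b, run (Aut n) w t = inl (j, b) ->
    exists q, t <= q < t + 2 ^ n /\ run (Aut n) w q.+1 = sD n.
  elim=> [|t IH] j b; first by [].
  move=> h. case e: (run (Aut n) w t) => [[j' b']|[[]|]].
  - have [q [hq rq]] := IH _ _ e.
    exists q. case: (q =P t) => hqt.
      by move: rq; rewrite hqt h.
    split => //. lia.
  - have [ej eb] := start t j b h (or_introl e). subst j b.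
    have hN := best_spec al t.
    have hN' : tkrun w (best al t) false t.+1 (2 ^ n) = None by [].
    have [d [b'' [hd [h1 h2]]]] := tkrun_none hN'.
    exists (t.+1 + d). split; first lia.
    exact: corrD h h1 h2.
  - by move: h; rewrite runS e /dlt /w /outcome; case: (al t).
  - have [ej eb] := start t j b h (or_intror e). subst j b.
    have hN' : tkrun w (best al t) false t.+1 (2 ^ n) = None by exact: best_spec.
    have [d [b'' [hd [h1 h2]]]] := tkrun_none hN'.
    exists (t.+1 + d). split; first lia.
    exact: corrD h h1 h2.
exists 0 => t _.
case e: (run (Aut n) w t) => [[j b]|[[]|]].
- have [q [hq rq]] := J _ _ _ e. right. exists q.+2. rewrite e.
  split; first lia. rewrite runS rq /dlt /=.
  split; first by case: (al q.+1).
  rewrite seg_costE; lia.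
- by left; rewrite e.
- right. exists t.+1. rewrite e runS e /dlt seg_costE //. split => //. split; last lia.
  by rewrite /w /outcome; case: (al t).
- by left; rewrite e.
Qed.
End UB.

Theorem proposition1 :
  exists c : nat, forall n : nat,
    exists (SI SO : finType) (A : pca (SI * SO)%type),
      finitary A /\ #|pca_st A| <= c * n.+1 /\
      forall f : nat -> nat, delay_fun f ->
        (O_wins f (accepts A) <-> 2 ^ n + 1 <= f 0) /\
        (2 ^ n + 1 <= f 0 -> optimal_cost f A (2 ^ n + 1)).
Proof.
exists 7 => n.
exists (bool * 'I_n.+2)%type, 'I_n.+2, (Aut n).
split; first by [].
split.
  rewrite /= card_sum card_prod card_option !card_ord card_bool. lia.
move=> f hf. split.
  split.
    move=> [tau hw]. case: (leqP (2 ^ n + 1) (f 0)) => // h.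
    exfalso. apply: (lose (n := n) (tau := tau) _ hw). lia.
  move=> h. exists (@tauO n f) => al. exists (2 ^ n + 1). exact: ub.
move=> h. split.
  exists (@tauO n f).
  have hw : winningO f (accepts (Aut n)) (@tauO n f).
    by move=> al; exists (2 ^ n + 1); exact: ub.
  split => //. split; first by move=> al; exact: ub.
  move=> j; exact: lb hw.
move=> tau j hw hc; exact: lb hw hc.
Qed.
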